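(* Let $f_A,f_R,F,d_a,d_e$ be as in the context and let $\chi\in[0,1)$. There exists no $R\in(0,\frac{d_e}{2}]$ such that the ring state $\delta_{(R,0)}$ is an equilibrium state of the mean-field equation $\partial_t\rho+\nabla\cdot[\rho\,(F(\cdot,T)\ast\rho)]=0$.
   Context: Let $f_R, f_A:[0,\infty)\to\mathbb{R}$ be smooth integrable functions with $f_R\ge 0$ and $f_A\le 0$, such that there is $d_a>0$ with $(f_A+f_R)(\rho)\le 0$ for $\rho>d_a$ and $(f_A+f_R)(\rho)>0$ for $0\le\rho<d_a$. For $\chi\in[0,1]$, $s=(0,1)$, $l=(1,0)$, let $T=\chi\, s\otimes s + l\otimes l$ and $F(d,T) = f_A(|d|)\,T d + f_R(|d|)\,d$ for $d\in\mathbb{R}^2$; assume $F$ is $C^1$ with bounded total derivatives. Assume there is $d_e>d_a$ such that $\chi f_A+f_R$ is strictly decreasing on $[0,d_e]$ for all $\chi\in[0,1]$. A Borel probability measure $\mu$ on $\mathbb{R}^2$ is an equilibrium state if $K(x):=\int_{\mathbb{R}^2}F(x-y,T)\,d\mu(y)$ satisfies $K\in L^1_{loc}(d\mu)$ and $K=0$ on $\mathrm{supp}(\mu)$ $\mu$-a.e. For $R>0$ the ring state $\delta_{(R,0)}$ is the uniform probability measure on the circle $\{(R\cos\phi,R\sin\phi)\}$. *)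

(* Defs.v *)
From HB Require Import structures.
From mathcomp Require Import all_boot all_order all_algebra.
From mathcomp Require Import all_classical all_reals all_analysis.
Set Implicit Arguments. Unset Strict Implicit. Unset Printing Implicit Defensive.
Import Order.TTheory GRing.Theory Num.Theory.
Import numFieldNormedType.Exports.
Local Open Scope classical_set_scope.
Local Open Scope ring_scope.

Section Defs.
Variable R : realType.

Definition enorm (d : R * R) : R := Num.sqrt (d.1 ^+ 2 + d.2 ^+ 2).

(* T = chi s(x)s + l(x)l with s = (0,1), l = (1,0), applied to d:
   (s(x)s) d = (0, d.2), (l(x)l) d = (d.1, 0). *)
Definition Tapp (chi : R) (d : R * R) : R * R := (d.1, chi * d.2).

Definition Fint (fA fR : R -> R) (chi : R) (d : R * R) : R * R :=
  (fA (enorm d) * (Tapp chi d).1 + fR (enorm d) * d.1,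
   fA (enorm d) * (Tapp chi d).2 + fR (enorm d) * d.2).

Definition ringpt (r phi : R) : R * R := (r * cos phi, r * sin phi).

(* The ring state delta_(r,0) is the push-forward of the normalised Lebesgue
   measure on [0, 2 pi] under phi |-> ringpt r phi.  Hence for the ring state,
   K(x) = int F(x - y, T) d mu(y) = (2 pi)^-1 int_0^{2 pi} F(x - ringpt r phi) dphi. *)
Definition Kring (fA fR : R -> R) (chi r : R) (x : R * R) : R * R :=
  ((2 * pi)^-1 * Rintegral lebesgue_measure `[0, 2 * pi]%classic
      (fun phi => (Fint fA fR chi (x - ringpt r phi)).1),
   (2 * pi)^-1 * Rintegral lebesgue_measure `[0, 2 * pi]%classic
      (fun phi => (Fint fA fR chi (x - ringpt r phi)).2)).

(* The ring state delta_(r,0) is an equilibrium state: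
   K in L^1_loc(d mu): for every compact C, int_C |K| d mu < oo,
   and K = 0 mu-a.e. on supp(mu) (= the circle). *)
Definition ring_equilibrium (fA fR : R -> R) (chi r : R) : Prop :=
  (forall C : set (R * R), compact C ->
     lebesgue_measure.-integrable
       (`[0, 2 * pi]%classic `&` (ringpt r @^-1` C))
       (fun phi => (enorm (Kring fA fR chi r (ringpt r phi)))%:E)) /\
  lebesgue_measure.-negligible
    [set phi : R | `[0, 2 * pi]%classic phi /\
                   Kring fA fR chi r (ringpt r phi) <> 0].

(* smooth on [0, oo): restriction of a C^oo function on R *)
Definition smooth_on_halfline (f : R -> R) : Prop :=
  exists g : R -> R, (forall n x, derivable (derive1n n g) x 1) /\
                     (forall x, 0 <= x -> g x = f x).

End Defs.

(* Main.v *)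
Require Import Defs.
From HB Require Import structures.
From mathcomp Require Import all_boot all_order all_algebra.
From mathcomp Require Import all_classical all_reals all_analysis.
From mathcomp Require Import ring lra.
Import Order.TTheory GRing.Theory Num.Theory.
Import numFieldNormedType.Exports.
Local Open Scope classical_set_scope.
Local Open Scope ring_scope.
Section S.
Context {R : realType}.
Local Notation mu := (@lebesgue_measure R).

Lemma derive1_shift (c : R) : derive1 (shift c) = cst 1.
Proof. apply/funext => z; rewrite derive1E; exact: (congr1 (fun g => g z) (derive_shift (1:R) c)). Qed.

Lemma Rint_shift (h : R -> R) (c a b : R) : a <= b -> continuous h ->
 \int[mu]_(x in `[a + c, b + c]) h x = \int[mu]_(x in `[a, b]) h (x + c).
Proof.
move=> ab ch; rewrite /Rintegral; congr fine.
rewrite (@integration_by_substitution_increasing _ (shift c) h a b ab).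
- apply: eq_integral => x _; rewrite derive1_shift /= mulr1 //.
- by move=> x y _ _ xy; rewrite /= ltrD2r.
- by rewrite derive1_shift => ? _; exact: cvg_cst.
- by rewrite derive1_shift; exact: is_cvg_cst.
- by rewrite derive1_shift; exact: is_cvg_cst.
- split.
  + by move=> x _; apply: ex_derive; exact: is_derive_shift.
  + by apply: cvg_at_right_filter; apply: cvgD; [exact: cvg_id | exact: cvg_cst].
  + by apply: cvg_at_left_filter; apply: cvgD; [exact: cvg_id | exact: cvg_cst].
- by apply: continuous_subspaceT.
Qed.

Lemma cint (a b : R) (h : R -> R) : continuous h -> mu.-integrable `[a, b] (EFin \o h).
Proof.
move=> ch; apply: continuous_compact_integrable; first exact: segment_compact.
exact: continuous_subspaceT.
Qed.

Lemma Rint_split (h : R -> R) (a b c : R) : a <= b -> b <= c -> continuous h ->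
 \int[mu]_(x in `[a, c]) h x = \int[mu]_(x in `[a, b]) h x + \int[mu]_(x in `[b, c]) h x.
Proof.
move=> ab bc ch.
have := @Rintegral_itvB R h (BLeft a) (BRight c) b (cint a c h ch).
rewrite !bnd_simp => /(_ ab bc) E.
have E2 : \int[mu]_(x in `]b, c]) h x = \int[mu]_(x in `[b, c]) h x.
  apply: Rintegral_itv_obnd_cbnd.
  by apply: (integrableS _ _ _ (cint b c h ch)) => //; apply: subset_itvr; rewrite bnd_simp.
by rewrite -E2 -E addrC subrK.
Qed.

Lemma Rint_refl (h : R -> R) (a b : R) : a <= b -> continuous h ->
 \int[mu]_(x in `[- b, - a]) h x = \int[mu]_(x in `[a, b]) h (- x).
Proof.
move=> ab ch; rewrite /Rintegral; congr fine.
rewrite integration_by_substitution_oppr //.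
exact: continuous_subspaceT.
Qed.


Lemma Rint_shift' (h : R -> R) (c a b a' b' : R) : a <= b -> continuous h ->
  a' = a + c -> b' = b + c ->
 \int[mu]_(x in `[a', b']) h x = \int[mu]_(x in `[a, b]) h (x + c).
Proof. by move=> ab ch -> ->; exact: Rint_shift. Qed.

Lemma Rint_periodic (h : R -> R) (P t : R) : 0 <= t -> t <= P -> continuous h ->
  (forall x, h (x + P) = h x) ->
  \int[mu]_(x in `[0, P]) h x = \int[mu]_(x in `[0, P]) h (x + t).
Proof.
move=> t0 tP ch hP.
have P0 : 0 <= P by apply: le_trans tP.
rewrite -(Rint_shift' h t 0 P t (P+t) P0 ch) ?add0r //.
rewrite (Rint_split h t P (P+t)) // ?lerDl //.
rewrite (Rint_shift' h P 0 t P (P+t) t0 ch) ?add0r 1?addrC //.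
have -> : \int[mu]_(x in `[0, t]) h (x + P) = \int[mu]_(x in `[0, t]) h x.
  by apply: eq_Rintegral => x _; rewrite hP.
by rewrite (Rint_split h 0 t P) // addrC.
Qed.

Lemma Rint_odd (q : R -> R) (m : R) : 0 <= m -> continuous q ->
  (forall x, q (- x) = - q x) -> (forall x, q (x + (m + m)) = q x) ->
  \int[mu]_(x in `[0, m + m]) q x = 0.
Proof.
move=> m0 cq qN qP.
rewrite (Rint_split q 0 m (m+m)) ?lerDl //.
rewrite (Rint_shift' q (m+m) (-m) 0 m (m+m)) ?oppr_le0 ?add0r ?addKr //.
have -> : \int[mu]_(x in `[-m, 0]) q (x + (m + m)) = \int[mu]_(x in `[-m, 0]) q x.
  by apply: eq_Rintegral => x _; rewrite qP.
have -> : \int[mu]_(x in `[- m, 0]) q x = \int[mu]_(x in `[0, m]) q (- x).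
  by rewrite -Rint_refl // oppr0.
have -> : \int[mu]_(x in `[0, m]) q (- x) = \int[mu]_(x in `[0, m]) (-1 * q x).
  by apply: eq_Rintegral => x _; rewrite qN mulN1r.
rewrite RintegralZl //; first by rewrite mulN1r subrr.
exact: cint.
Qed.

End S.

Section M.
Context {R : realType}.
Local Notation mu := (@lebesgue_measure R).
Variables (fA fR : R -> R) (chi r : R).
Definition rho (p : R) : R := Num.sqrt (r ^+ 2 * (2 - 2 * cos p)).
Definition Gc (c p : R) : R := c * fA (rho p) + fR (rho p).
Definition W (c p : R) : R := Gc c p * (r * (1 - cos p)).
Definition S (c p : R) : R := Gc c p * (r * sin p).

Lemma enorm_diff t p : enorm (ringpt r t - ringpt r (p + t)) = rho p.
Proof.
rewrite /enorm /rho /ringpt /=; congr Num.sqrt.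
rewrite cosD sinD.
have E : forall a b : R, a ^+ 2 + b ^+ 2 = 1 -> (cos p) ^+ 2 + (sin p) ^+ 2 = 1 ->
  (r * a - r * (cos p * a - sin p * b)) ^+ 2 + (r * b - r * (sin p * a + cos p * b)) ^+ 2
  = r ^+ 2 * (2 - 2 * cos p).
  move=> a b ab cs.
  have -> : (r * a - r * (cos p * a - sin p * b)) ^+ 2 + (r * b - r * (sin p * a + cos p * b)) ^+ 2
    = r ^+ 2 * (1 - 2 * cos p + (cos p ^+ 2 + sin p ^+ 2)) * (a ^+ 2 + b ^+ 2) by ring.
  rewrite ab cs; ring.
by apply: E; rewrite cos2Dsin2.
Qed.

Lemma Fint1 t p : (Fint fA fR chi (ringpt r t - ringpt r (p + t))).1 = cos t * W 1 p + sin t * S 1 p.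
Proof.
rewrite /Fint /= enorm_diff /W /S /Gc /ringpt /= ?cosD ?sinD; ring.
Qed.

Lemma Fint2 t p : (Fint fA fR chi (ringpt r t - ringpt r (p + t))).2 = sin t * W chi p - cos t * S chi p.
Proof.
rewrite /Fint /= enorm_diff /W /S /Gc /ringpt /= ?cosD ?sinD; ring.
Qed.

Lemma cont_rho : continuous rho.
Proof.
move=> x; rewrite /rho.
apply: (@continuous_comp _ _ _ (fun p => r ^+ 2 * (2 - 2 * cos p)) Num.sqrt); last exact: sqrt_continuous.
apply: cvgM; first exact: cvg_cst.
apply: cvgB; first exact: cvg_cst.
apply: cvgM; first exact: cvg_cst.
exact: continuous_cos.
Qed.

Variables (gA gR : R -> R).
Hypotheses (cgA : continuous gA) (cgR : continuous gR)
  (eA : forall x, 0 <= x -> gA x = fA x) (eR : forall x, 0 <= x -> gR x = fR x).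

Lemma cont_fArho : continuous (fun p => fA (rho p)).
Proof.
have -> : (fun p => fA (rho p)) = gA \o rho.
  by apply/funext => p /=; rewrite eA // sqrtr_ge0.
move=> x; apply: continuous_comp; [exact: cont_rho | exact: cgA].
Qed.

Lemma cont_fRrho : continuous (fun p => fR (rho p)).
Proof.
have -> : (fun p => fR (rho p)) = gR \o rho.
  by apply/funext => p /=; rewrite eR // sqrtr_ge0.
move=> x; apply: continuous_comp; [exact: cont_rho | exact: cgR].
Qed.

Lemma cont_Gc c : continuous (Gc c).
Proof.
move=> x; apply: cvgD; last exact: cont_fRrho.
apply: cvgM; [exact: cvg_cst | exact: cont_fArho].
Qed.

Lemma cont_W c : continuous (W c).
Proof.
move=> x; apply: cvgM; first exact: cont_Gc.
apply: cvgM; first exact: cvg_cst.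
apply: cvgB; [exact: cvg_cst | exact: continuous_cos].
Qed.

Lemma cont_S c : continuous (S c).
Proof.
move=> x; apply: cvgM; first exact: cont_Gc.
apply: cvgM; [exact: cvg_cst | exact: continuous_sin].
Qed.

Lemma cont_P : continuous (fun p => fR (rho p) * (r * (1 - cos p))).
Proof.
move=> x; apply: cvgM; first exact: cont_fRrho.
apply: cvgM; first exact: cvg_cst.
apply: cvgB; [exact: cvg_cst | exact: continuous_cos].
Qed.

Lemma S_odd c p : S c (- p) = - S c p.
Proof. by rewrite /S /Gc /rho cosN sinN mulrN mulrN. Qed.

Lemma S_per c p : S c (p + (pi + pi)) = S c p.
Proof. by rewrite /S /Gc /rho -mulr2n cosD2pi sinD2pi. Qed.

Lemma two_pi : 2 * pi = pi + pi :> R.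
Proof. by rewrite mulr_natl mulr2n. Qed.

Lemma int_S c : \int[mu]_(x in `[0, 2 * pi]) S c x = 0.
Proof.
rewrite two_pi; apply: Rint_odd; first exact: pi_ge0.
- exact: cont_S.
- exact: S_odd.
- exact: S_per.
Qed.
Lemma ringpt_per p : ringpt r (p + 2 * pi) = ringpt r p.
Proof. by rewrite /ringpt two_pi -mulr2n cosD2pi sinD2pi. Qed.

Lemma cont_shiftN t : continuous (fun x : R => x - t).
Proof. move=> x; apply: cvgB; [exact: cvg_id | exact: cvg_cst]. Qed.

Lemma cont_cW c k : continuous (fun x => k * W c x).
Proof. move=> x; apply: cvgM; [exact: cvg_cst | exact: cont_W]. Qed.

Lemma cont_cS c k : continuous (fun x => k * S c x).
Proof. move=> x; apply: cvgM; [exact: cvg_cst | exact: cont_S]. Qed.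

Lemma cont_k1 t : continuous (fun p => (Fint fA fR chi (ringpt r t - ringpt r p)).1).
Proof.
have -> : (fun p => (Fint fA fR chi (ringpt r t - ringpt r p)).1) =
   (fun p => cos t * W 1 (p - t) + sin t * S 1 (p - t)).
  by apply/funext => p; rewrite -Fint1 subrK.
move=> x; apply: cvgD.
  apply: cvgM; first exact: cvg_cst.
  apply: (@continuous_comp _ _ _ (fun x => x - t) (W _)); [exact: cont_shiftN | exact: cont_W].
apply: cvgM; first exact: cvg_cst.
apply: (@continuous_comp _ _ _ (fun x => x - t) (S _)); [exact: cont_shiftN | exact: cont_S].
Qed.

Lemma cont_k2 t : continuous (fun p => (Fint fA fR chi (ringpt r t - ringpt r p)).2).
Proof.
have -> : (fun p => (Fint fA fR chi (ringpt r t - ringpt r p)).2) =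
   (fun p => sin t * W chi (p - t) - cos t * S chi (p - t)).
  by apply/funext => p; rewrite -Fint2 subrK.
move=> x; apply: cvgB.
  apply: cvgM; first exact: cvg_cst.
  apply: (@continuous_comp _ _ _ (fun x => x - t) (W _)); [exact: cont_shiftN | exact: cont_W].
apply: cvgM; first exact: cvg_cst.
apply: (@continuous_comp _ _ _ (fun x => x - t) (S _)); [exact: cont_shiftN | exact: cont_S].
Qed.

Lemma int_k1 t : 0 <= t -> t <= 2 * pi ->
  \int[mu]_(p in `[0, 2 * pi]) (Fint fA fR chi (ringpt r t - ringpt r p)).1 =
  cos t * \int[mu]_(p in `[0, 2 * pi]) W 1 p.
Proof.
move=> t0 t2.
rewrite (Rint_periodic _ _ t) //; last 2 first.
- exact: cont_k1.
- by move=> x; rewrite ringpt_per.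
under eq_Rintegral => x _ do rewrite Fint1.
rewrite RintegralD //; last 2 first.
- by apply: cint; apply: cont_cW.
- by apply: cint; apply: cont_cS.
rewrite !RintegralZl //; last 2 first.
- by apply: cint; apply: cont_S.
- by apply: cint; apply: cont_W.
by rewrite int_S mulr0 addr0.
Qed.

Lemma int_k2 t : 0 <= t -> t <= 2 * pi ->
  \int[mu]_(p in `[0, 2 * pi]) (Fint fA fR chi (ringpt r t - ringpt r p)).2 =
  sin t * \int[mu]_(p in `[0, 2 * pi]) W chi p.
Proof.
move=> t0 t2.
rewrite (Rint_periodic _ _ t) //; last 2 first.
- exact: cont_k2.
- by move=> x; rewrite ringpt_per.
under eq_Rintegral => x _ do rewrite Fint2.
rewrite RintegralB //; last 2 first.
- by apply: cint; apply: cont_cW.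
- by apply: cint; apply: cont_cS.
rewrite !RintegralZl //; last 2 first.
- by apply: cint; apply: cont_S.
- by apply: cint; apply: cont_W.
by rewrite int_S mulr0 subr0.
Qed.
Definition P p := fR (rho p) * (r * (1 - cos p)).

Lemma cont_P' : continuous P.
Proof. exact: cont_P. Qed.

Lemma int_P_pos (de : R) : 0 < r -> 2 * r <= de -> (forall x, 0 <= x -> 0 <= fR x) ->
  (forall x y, 0 <= x -> x < y -> y <= de -> fR y < fR x) ->
  0 < \int[mu]_(p in `[0, 2 * pi]) P p.
Proof.
move=> r0 rde fR0 dec.
have pi0 : 0 < pi :> R := pi_gt0 R.
set c : R := pi / 2 + pi / 4.
have hc1 : pi / 2 <= c by rewrite /c; lra.
have hc2 : c <= 2 * pi by rewrite /c; lra.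
have hcpi : c < pi by rewrite /c; lra.
have hc1' : pi / 2 < c by rewrite /c; lra.
have P0 : forall p, 0 <= P p.
  move=> p; apply: mulr_ge0; first by apply: fR0; exact: sqrtr_ge0.
  by apply: mulr_ge0; [exact: ltW | rewrite subr_ge0 cos_le1].
have cpi : 0 <= c <= pi by apply/andP; split; [rewrite /c; lra | exact: ltW].
have cosc : -1 < cos c.
  by rewrite -cospi (ltr_cos (x:=c) (y:=pi)) // in_itv /= ?lexx ?pi_ge0.
have rhoc : rho c < 2 * r.
  have -> : 2 * r = Num.sqrt ((2 * r) ^+ 2) by rewrite sqrtr_sqr ger0_norm //; lra.
  rewrite /rho ltr_sqrt; last by apply: exprn_gt0; lra.
  have -> : (2 * r) ^+ 2 = r ^+ 2 * 4 by ring.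
  rewrite ltr_pM2l; [lra | exact: exprn_gt0].
have fRc : 0 < fR (rho c).
  apply: (le_lt_trans (fR0 (2 * r) _)); first lra.
  by apply: dec => //; exact: sqrtr_ge0.
have key : forall p, `[pi / 2, c]%classic p -> fR (rho c) * r <= P p.
  move=> p; rewrite /= in_itv /= => /andP[h1 h2].
  have cp0 : cos p <= 0.
    have -> : p = (p - pi / 2) + pi / 2 by rewrite subrK.
    rewrite cosDpihalf oppr_le0; apply: sin_ge0_pi; apply/andP; split; lra.
  have ccp : cos c <= cos p.
    have [->|pc] := eqVneq p c; first exact: lexx.
    rewrite le_eqVlt (ltr_cos (x:=p) (y:=c)); last 2 first.
    - by rewrite in_itv /=; apply/andP; split; lra.
    - by rewrite in_itv /=.
    by apply/orP; right; rewrite lt_neqAle pc h2.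
  have rpc : rho p <= rho c.
    rewrite /rho ler_sqrt; last by apply: mulr_ge0; [exact: sqr_ge0 | lra].
    by rewrite ler_wpM2l ?sqr_ge0 //; lra.
  have fRpc : fR (rho c) <= fR (rho p).
    move: rpc; rewrite le_eqVlt => /orP[/eqP -> // | lt].
    apply: ltW; apply: dec => //; first exact: sqrtr_ge0.
    lra.
  rewrite /P; apply: ler_pM => //; first exact: ltW.
  - exact: ltW.
  rewrite -{1}[r]mulr1 ler_wpM2l //; [exact: ltW | lra].
have I2 : fR (rho c) * r * (c - pi / 2) <= \int[mu]_(p in `[pi / 2, c]) P p.
  have M : fine (mu (`[pi / 2, c]%classic : set R)) = c - pi / 2.
    by rewrite lebesgue_measure_itv /= lte_fin hc1'.
  have := @le_Rintegral _ _ _ mu `[pi / 2, c] (cst (fR (rho c) * r)) P.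
  rewrite Rintegral_cst // -M; apply => //.
  - by apply: cint; move=> x; exact: cvg_cst.
  - exact: cint cont_P'.
have pos : 0 < fR (rho c) * r * (c - pi / 2).
  by apply: mulr_gt0; [exact: mulr_gt0 | rewrite /c; lra].
rewrite (Rint_split _ 0 (pi / 2) (2 * pi)); [| lra | lra | exact: cont_P'].
rewrite (Rint_split _ (pi / 2) c (2 * pi)) //; last exact: cont_P'.
have I1 := Rintegral_ge0 mu (D := `[0, pi / 2]) (fun x _ => P0 x).
have I3 := Rintegral_ge0 mu (D := `[c, 2 * pi]) (fun x _ => P0 x).
apply: (lt_le_trans pos); apply: (le_trans I2); rewrite addrCA lerDl; exact: addr_ge0.
Qed.
Lemma int_Wchi : \int[mu]_(p in `[0, 2 * pi]) W chi p =
  chi * \int[mu]_(p in `[0, 2 * pi]) W 1 p + (1 - chi) * \int[mu]_(p in `[0, 2 * pi]) P p.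
Proof.
have -> : \int[mu]_(p in `[0, 2 * pi]) W chi p =
   \int[mu]_(p in `[0, 2 * pi]) (chi * W 1 p + (1 - chi) * P p).
  by apply: eq_Rintegral => p _; rewrite /W /Gc /P; ring.
rewrite RintegralD //; last 2 first.
- by apply: cint; apply: cont_cW.
- by apply: cint => x; apply: cvgM; [exact: cvg_cst | exact: cont_P'].
rewrite !RintegralZl //.
- by apply: cint; apply: cont_P'.
- by apply: cint; apply: cont_W.
Qed.
End M.

Lemma smooth_cont (R : realType) (f : R -> R) : smooth_on_halfline f ->
  exists g : R -> R, continuous g /\ (forall x, 0 <= x -> g x = f x).
Proof.
move=> [g [dg eg]]; exists g; split => // x.
have := dg 0%N x => /= dx.
exact/differentiable_continuous/derivable1_diffP.
Qed.

Theorem proposition3p6 (R : realType) (fA fR : R -> R) (da de chi : R) :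
  smooth_on_halfline fA -> smooth_on_halfline fR ->
  lebesgue_measure.-integrable `[0%R, +oo[%classic (fun x => (fA x)%:E) ->
  lebesgue_measure.-integrable `[0%R, +oo[%classic (fun x => (fR x)%:E) ->
  (forall rho, 0 <= rho -> 0 <= fR rho) ->
  (forall rho, 0 <= rho -> fA rho <= 0) ->
  0 < da ->
  (forall rho, da < rho -> fA rho + fR rho <= 0) ->
  (forall rho, 0 <= rho < da -> 0 < fA rho + fR rho) ->
  da < de ->
  (forall c, 0 <= c <= 1 -> forall x y, 0 <= x -> x < y -> y <= de ->
       c * fA y + fR y < c * fA x + fR x) ->
  0 <= chi < 1 ->
  (* F( . ,T) is C^1 with bounded total derivative *)
  (forall d, differentiable (Fint fA fR chi) d) ->
  (forall v, continuous (fun d => 'd (Fint fA fR chi) d v)) ->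
  (exists M : R, forall d v, `|'d (Fint fA fR chi) d v| <= M * `|v|) ->
  ~ (exists r : R, 0 < r <= de / 2 /\ ring_equilibrium fA fR chi r).
Proof.
move=> /smooth_cont [gA [cgA eA]] /smooth_cont [gR [cgR eR]] _ _ fR0 _ _ _ _ _ dec
  /andP[chi0 chi1] _ _ _ [r [/andP[r0 rde] [_ negl]]].
have pi0 : 0 < pi :> R := pi_gt0 R.
have decR : forall x y, 0 <= x -> x < y -> y <= de -> fR y < fR x.
  move=> x y x0 xy yde; have := dec 0 _ x y x0 xy yde.
  by rewrite !mul0r !add0r; apply; rewrite lexx ler01.
have Ppos : 0 < \int[lebesgue_measure]_(p in `[0, 2 * pi]) P fR r p.
  by apply: (@int_P_pos R fR r gR cgR eR de r0) => //; lra.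
have sub : `]0, pi / 2[%classic `<=`
   [set phi : R | `[0, 2 * pi]%classic phi /\
                  Kring fA fR chi r (ringpt r phi) <> 0].
  move=> t; rewrite /= in_itv /= => /andP[t0 t1].
  have t0' : 0 <= t by exact: ltW.
  have t2 : t <= 2 * pi by lra.
  split; first by rewrite /= in_itv /= t0' t2.
  move=> H.
  have H1 := congr1 fst H; have H2 := congr1 snd H.
  move: H1 H2; rewrite /Kring /=.
  rewrite (int_k1 fA fR chi r gA gR cgA cgR eA eR t t0' t2) (int_k2 fA fR chi r gA gR cgA cgR eA eR t t0' t2).
  have ipi : (2 * pi)^-1 != 0 :> R by rewrite invr_eq0; apply/eqP; lra.
  have ct : cos t != 0 by rewrite gt_eqF //; apply: cos_gt0_pihalf; apply/andP; split; lra.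
  have st : sin t != 0 by rewrite gt_eqF //; apply: sin_gt0_pihalf; apply/andP; split; lra.
  move=> /eqP; rewrite !mulf_eq0 (negbTE ipi) (negbTE ct) /= => /eqP A1.
  move=> /eqP; rewrite !mulf_eq0 (negbTE ipi) (negbTE st) /= => /eqP A2.
  move: A2; rewrite (int_Wchi fA fR chi r gA gR cgA cgR eA eR) A1 mulr0 add0r => /eqP.
  rewrite mulf_eq0 => /orP[/eqP|/eqP]; lra.
case: negl => A [mA muA NA].
have M : lebesgue_measure (`]0, pi / 2[%classic : set R) = (pi / 2)%:E.
  rewrite lebesgue_measure_itv /= lte_fin ifT; last lra.
  by rewrite oppr0 adde0.
have : (lebesgue_measure (`]0%R, (pi / 2)%R[%classic : set R) <= lebesgue_measure A)%E.
  apply: le_measure => //.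
  - by rewrite inE; exact: measurable_itv.
  - by rewrite inE.
  - by move=> x /sub /NA.
rewrite M muA lee_fin; lra.
Qed.
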